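(* Let $K\ge 1$ be an integer, let $h_1,\dots,h_K>0$, $\sigma^2>0$ and $P>0$ be real numbers. For $g\in\mathbb{R}$ and $b=(b_1,\dots,b_K)\in\mathbb{R}^K$ define $$\mathsf{MSE}(g,b)=\sum_{k=1}^{K}(g h_k b_k-1)^2+\sigma^2 g^2 .$$ Consider the problem of minimizing $\mathsf{MSE}(g,b)$ over $g\in\mathbb{R}$, $b\in\mathbb{R}^K$ subject to $\sum_{k=1}^K b_k^2\le P$. Set $\beta_k=\dfrac{P h_k}{\sigma^2+P h_k^2}$ for $k=1,\dots,K$. Then the minimum value of this problem equals $$\mathsf{MSE}^\star=\sum_{k=1}^{K}\frac{\sigma^2}{\sigma^2+P h_k^2},$$ and it is attained at $$g^\star=\sqrt{\frac{1}{P}\sum_{k=1}^{K}\beta_k^2},\qquad b_k^\star=\beta_k\sqrt{\frac{P}{\sum_{j=1}^{K}\beta_j^2}},\quad k=1,\dots,K.$$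
   Context: This models an over-the-air computation system with $K$ single-antenna sensors: $h_k$ is the (magnitude of the) channel coefficient of sensor $k$, $b_k$ its transmit scaling factor, $g$ the receiver scaling factor, $\sigma^2$ the receiver noise variance, and $P$ a sum-power limit. All variables are taken real (phases having been aligned), with $h_k>0$. *)

(* Defs.v *)
(* R is an arbitrary real closed field (covers the reals). *)
From HB Require Import structures.
From mathcomp Require Import all_boot all_order all_algebra.
Set Implicit Arguments. Unset Strict Implicit. Unset Printing Implicit Defensive.
Import Order.TTheory GRing.Theory Num.Theory.
Local Open Scope ring_scope.

Section OTA.
Variables (R : rcfType) (K : nat) (h : 'I_K -> R) (sigma2 P : R).

Definition MSE (g : R) (b : 'I_K -> R) : R :=
  \sum_(k < K) (g * h k * b k - 1) ^+ 2 + sigma2 * g ^+ 2.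

Definition beta (k : 'I_K) : R := P * h k / (sigma2 + P * h k ^+ 2).

Definition MSE_star : R := \sum_(k < K) sigma2 / (sigma2 + P * h k ^+ 2).

Definition g_star : R := Num.sqrt (P^-1 * \sum_(k < K) beta k ^+ 2).

Definition b_star (k : 'I_K) : R :=
  beta k * Num.sqrt (P / \sum_(j < K) beta j ^+ 2).
End OTA.

(* Main.v *)
Require Import Defs.
From HB Require Import structures.
From mathcomp Require Import all_boot all_order all_algebra.
From mathcomp Require Import ring lra.
Import Order.TTheory GRing.Theory Num.Theory.
Local Open Scope ring_scope.

Theorem theorem1 (R : rcfType) (K : nat) (h : 'I_K -> R) (sigma2 P : R)
  (hK : (1 <= K)%N) (hh : forall k, 0 < h k) (hs : 0 < sigma2) (hP : 0 < P) :
  (* MSE_star is a lower bound on the feasible set *)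
  (forall (g : R) (b : 'I_K -> R),
      \sum_(k < K) b k ^+ 2 <= P -> MSE_star h sigma2 P <= MSE h sigma2 g b)
  (* and it is attained at the feasible point (g_star, b_star) *)
  /\ \sum_(k < K) b_star h sigma2 P k ^+ 2 <= P
  /\ MSE h sigma2 (g_star h sigma2 P) (b_star h sigma2 P) = MSE_star h sigma2 P.
Proof.
have hD : forall k, 0 < sigma2 + P * h k ^+ 2.
  by move=> k; rewrite addr_gt0 // mulr_gt0 // exprn_gt0.
have key : forall k (g c : R), (g * h k * c - 1) ^+ 2 + sigma2 * (g ^+ 2 * c ^+ 2) / P
    = sigma2 / (sigma2 + P * h k ^+ 2) + (sigma2 + P * h k ^+ 2) *
      (g * h k * c - P * h k ^+ 2 / (sigma2 + P * h k ^+ 2)) ^+ 2 / (P * h k ^+ 2).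
  move=> k g c; have := hD k; have := hh k => hk hd.
  field; by rewrite ?lt0r_neq0.
have hbeta : forall k, 0 < beta h sigma2 P k.
  by move=> k; rewrite /beta divr_gt0 ?mulr_gt0.
set S := \sum_(k < K) beta h sigma2 P k ^+ 2.
have hS : 0 < S.
  rewrite /S (bigD1 (Ordinal hK)) //=; apply: ltr_wpDr.
    by apply: sumr_ge0 => i _; rewrite exprn_ge0 ?ltW.
  by rewrite exprn_gt0.
have sq1 : Num.sqrt (P^-1 * S) * Num.sqrt (P / S) = 1.
  rewrite -sqrtrM ?mulr_ge0 ?invr_ge0 ?ltW //.
  have -> : P^-1 * S * (P / S) = 1 by field; rewrite ?lt0r_neq0.
  by rewrite sqrtr1.
split.
  move=> g b hb; rewrite /MSE_star /MSE.
  apply: (@le_trans _ _ (\sum_(k < K) ((g * h k * b k - 1) ^+ 2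
       + sigma2 * (g ^+ 2 * b k ^+ 2) / P))).
    apply: ler_sum => k _; rewrite key lerDl.
    have := hD k; have := hh k => hk hd.
    by apply: divr_ge0; [apply: mulr_ge0; [exact: ltW | exact: sqr_ge0] | apply: mulr_ge0; [exact: ltW | exact: sqr_ge0]].
  rewrite big_split /= lerD2l.
  have -> : \sum_(k < K) sigma2 * (g ^+ 2 * b k ^+ 2) / P
       = sigma2 * g ^+ 2 / P * \sum_(k < K) b k ^+ 2.
    rewrite mulr_sumr; apply: eq_bigr => k _; field; by rewrite ?lt0r_neq0.
  apply: (@le_trans _ _ (sigma2 * g ^+ 2 / P * P)).
    apply: ler_wpM2l => //; apply: divr_ge0; last exact: ltW.
    by apply: mulr_ge0; [exact: ltW | exact: sqr_ge0].
  by rewrite divfK ?lt0r_neq0.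
split.
  rewrite /b_star.
  have -> : \sum_(k < K) (beta h sigma2 P k * Num.sqrt (P / S)) ^+ 2
     = S * Num.sqrt (P / S) ^+ 2.
    rewrite /S mulr_suml; apply: eq_bigr => k _; by rewrite exprMn.
  rewrite sqr_sqrtr; last by rewrite divr_ge0 // ltW.
  by rewrite mulrC divfK ?lt0r_neq0.
rewrite /MSE /MSE_star /g_star /b_star -/S.
rewrite sqr_sqrtr ?mulr_ge0 ?invr_ge0 ?ltW //.
have -> : \sum_(k < K) (Num.sqrt (P^-1 * S) * h k * (beta h sigma2 P k * Num.sqrt (P / S)) - 1) ^+ 2
   = \sum_(k < K) (h k * beta h sigma2 P k - 1) ^+ 2.
  apply: eq_bigr => k _; congr (_ ^+ 2); congr (_ - _).
  rewrite -[RHS]mulr1 -sq1; ring.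
rewrite /S mulr_sumr mulr_sumr -big_split /=; apply: eq_bigr => k _.
have := hD k; have := hh k => hk hd.
rewrite /beta; field; by rewrite (lt0r_neq0 hd) (lt0r_neq0 hP).
Qed.
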